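(* Let $p\ge2$, $n\ge1$, $\epsilon\in[0,1-1/p]$, $m\in\{j/p^n:0\le j\le p^n\}$, and let $\Phi:[0,1]\to\mathbb{R}$ be convex. Then there exists a monotone Boolean function $f:(\mathbb{Z}/p\mathbb{Z})^n\to\{0,1\}$ with $\mathbb{E} f=m$ such that $\mathbb{E}\Phi(T_\epsilon f)\ge\mathbb{E}\Phi(T_\epsilon g)$ for every Boolean function $g:(\mathbb{Z}/p\mathbb{Z})^n\to\{0,1\}$ with $\mathbb{E} g=m$.
   Context: $(\mathbb{Z}/p\mathbb{Z})^n$, with $\mathbb{Z}/p\mathbb{Z}=\{0,1,\dots,p-1\}$, carries the uniform measure. The noise operator is $T_\epsilon f(x)=\mathbb{E} f(x+Z)$, where $Z$ has independent coordinates, each equal to $0$ with probability $1-\epsilon$ and to each nonzero element with probability $\epsilon/(p-1)$. A function $f$ is monotone if $f(x)\le f(y)$ whenever $x_i\le y_i$ for all $i$, where $\{0,1,\dots,p-1\}$ is ordered as integers. *)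

(* Defs.v *)
From HB Require Import structures.
From mathcomp Require Import all_boot all_order all_algebra.
Set Implicit Arguments. Unset Strict Implicit. Unset Printing Implicit Defensive.
Import Order.TTheory GRing.Theory Num.Theory.
Local Open Scope ring_scope.

(* The cube (Z/pZ)^n, for p >= 2 (so 'Z_p is really Z/pZ). *)
Definition cube (p n : nat) := {ffun 'I_n -> 'Z_p}.

Definition expect (R : realFieldType) (p n : nat) (F : cube p n -> R) : R :=
  (\sum_(x : cube p n) F x) / #|{: cube p n}|%:R.

Definition noise_prob (R : realFieldType) (p n : nat) (eps : R) (z : cube p n) : R :=
  \prod_(i < n) (if z i == 0 then 1 - eps else eps / (p.-1)%:R).

Definition T_noise (R : realFieldType) (p n : nat) (eps : R)
    (f : cube p n -> R) (x : cube p n) : R :=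
  \sum_(z : cube p n) noise_prob eps z * f [ffun i => x i + z i].

Definition bool_fun (R : realFieldType) (p n : nat) (f : cube p n -> bool) : cube p n -> R :=
  fun x => (f x)%:R.

(* monotone w.r.t. the coordinatewise order, 0 < 1 < ... < p-1 as integers *)
Definition monotone_bool (p n : nat) (f : cube p n -> bool) : Prop :=
  forall x y : cube p n, (forall i, (val (x i) <= val (y i))%N) -> (f x ==> f y).

Definition convex01 (R : realFieldType) (Phi : R -> R) : Prop :=
  forall x y t : R, 0 <= x <= 1 -> 0 <= y <= 1 -> 0 <= t <= 1 ->
    Phi (t * x + (1 - t) * y) <= t * Phi x + (1 - t) * Phi y.

(* Main.v *)
Require Import Defs.
From HB Require Import structures.
From mathcomp Require Import all_boot all_order all_algebra.
From mathcomp Require Import ring lra.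
Set Implicit Arguments. Unset Strict Implicit. Unset Printing Implicit Defensive.
Import Order.TTheory GRing.Theory Num.Theory.
Local Open Scope ring_scope.

Section Kern.
Variables (R : realFieldType) (p n : nat) (eps : R).
Hypothesis p1 : (1 < p)%N.
Hypothesis e0 : 0 <= eps.
Hypothesis e1 : eps <= 1 - (p%:R)^-1.

Definition kk (c d : 'Z_p) : R := if c == d then 1 - eps else eps / (p.-1)%:R.
Definition KK (x y : cube p n) : R := \prod_(j < n) kk (x j) (y j).

Lemma pm1_gt0 : 0 < (p.-1)%:R :> R.
Proof. by rewrite ltr0n; case: p p1 => [|[|q]]. Qed.

Lemma p_gt0 : 0 < p%:R :> R.
Proof. by rewrite ltr0n; case: p p1. Qed.

Lemma natp : p%:R = (p.-1)%:R + 1 :> R.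
Proof. by case: p p1 => // q _; rewrite -natr1. Qed.

Lemma kk_ge0 c d : 0 <= kk c d.
Proof.
rewrite /kk; case: eqP => _; last by rewrite divr_ge0 // ltW // pm1_gt0.
have : 0 <= (p%:R)^-1 :> R by rewrite invr_ge0 ltW // p_gt0.
move: e1; set q := (p%:R)^-1; lra.
Qed.

Lemma kk_off_le : eps / (p.-1)%:R <= 1 - eps.
Proof.
have h := pm1_gt0; rewrite ler_pdivrMr //.
have hp := p_gt0.
have : eps * p%:R <= p%:R - 1.
  have := e1; rewrite -(ler_pM2r hp) mulrBl mulVf ?gt_eqF // mul1r. by [].
rewrite natp; nra.
Qed.

Lemma KK_ge0 x y : 0 <= KK x y.
Proof. by apply: prodr_ge0 => j _; apply: kk_ge0. Qed.

Lemma card_Zp' : #|{: 'Z_p}| = p.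
Proof. by rewrite card_ord Zp_cast. Qed.

Lemma sum_kk c : \sum_(d : 'Z_p) kk c d = 1.
Proof.
rewrite (bigD1 c) //= /kk eqxx.
rewrite (eq_bigr (fun _ => eps / (p.-1)%:R)); last by move=> d /negbTE; rewrite eq_sym => ->.
rewrite sumr_const.
have -> : #|[pred i : 'Z_p | i != c]| = p.-1.
  transitivity #|predC1 c|; last by rewrite cardC1 card_Zp'.
  by apply: eq_card => d; rewrite !inE.
rewrite -[_ *+ p.-1]mulr_natr -mulrA mulVf ?mulr1 ?gt_eqF ?pm1_gt0 //.
by rewrite subrK.
Qed.

Lemma sum_KK x : \sum_y KK x y = 1.
Proof.
rewrite /KK -(bigA_distr_bigA (fun j d => kk (x j) d)) /=.
by rewrite big1 // => j _; apply: sum_kk.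
Qed.

Lemma T_noiseE (F : cube p n -> R) x :
  T_noise eps F x = \sum_y KK x y * F y.
Proof.
rewrite /T_noise (reindex (fun y : cube p n => [ffun j => y j - x j])) /=.
  apply: eq_bigr => y _; congr (_ * _).
    rewrite /noise_prob /KK; apply: eq_bigr => j _; rewrite ffunE /kk subr_eq0 eq_sym //.
  by congr F; apply/ffunP => j; rewrite !ffunE addrC subrK.
exists (fun z : cube p n => [ffun j => x j + z j]) => z _; apply/ffunP => j;
  rewrite !ffunE. by rewrite addrC subrK. by rewrite addrC addKr.
Qed.

End Kern.

Section Pol.
Variables (R : realFieldType) (p n : nat) (eps : R).
Hypothesis p1 : (1 < p)%N.
Hypothesis e0 : 0 <= eps.
Hypothesis e1 : eps <= 1 - (p%:R)^-1.
Variables (i : 'I_n) (a b : 'Z_p).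
Hypothesis ab : a != b.

Definition sw (c : 'Z_p) := if c == a then b else if c == b then a else c.
Definition sig (x : cube p n) : cube p n := [ffun j => if j == i then sw (x j) else x j].
Definition pol (g : cube p n -> bool) (x : cube p n) : bool :=
  if x i == b then g x || g (sig x) else if x i == a then g x && g (sig x) else g x.

Lemma swK c : sw (sw c) = c.
Proof.
rewrite /sw; case: (eqVneq c a) => [->|ca]; first by rewrite eqxx eq_sym (negbTE ab).
case: (eqVneq c b) => [->|cb]; first by rewrite eqxx.
by rewrite (negbTE ca) (negbTE cb).
Qed.

Lemma sw_eqa c : (sw c == a) = (c == b).
Proof.
rewrite /sw; case: (eqVneq c a) => [->|ca]; first by rewrite eq_sym (negbTE ab).
by case: (eqVneq c b) => [_|cb]; rewrite ?eqxx // (negbTE ca).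
Qed.

Lemma sw_eqb c : (sw c == b) = (c == a).
Proof. have H : sw a = b by rewrite /sw eqxx. by rewrite -H (inj_eq (can_inj swK)). Qed.

Lemma sw_fix c : c != a -> c != b -> sw c = c.
Proof. by rewrite /sw => /negbTE -> /negbTE ->. Qed.

Lemma sig_i (x : cube p n) : sig x i = sw (x i).
Proof. by rewrite ffunE eqxx. Qed.

Lemma sig_j (x : cube p n) j : j != i -> sig x j = x j.
Proof. by rewrite ffunE => /negbTE ->. Qed.

Lemma sigK (x : cube p n) : sig (sig x) = x.
Proof. by apply/ffunP => j; rewrite !ffunE; case: eqP => // ->; rewrite swK. Qed.

Lemma sig_inj : injective sig.
Proof. exact: can_inj sigK. Qed.

Definition rest (x y : cube p n) := \prod_(j < n | j != i) kk eps (x j) (y j).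

Lemma KK_split (x y : cube p n) : KK eps x y = kk eps (x i) (y i) * rest x y.
Proof. by rewrite /KK (bigD1 i). Qed.

Lemma rest_sigr (x y : cube p n) : rest x (sig y) = rest x y.
Proof. by apply: eq_bigr => j ji; rewrite sig_j. Qed.

Lemma rest_sigl (x y : cube p n) : rest (sig x) y = rest x y.
Proof. by apply: eq_bigr => j ji; rewrite sig_j. Qed.

Lemma rest_ge0 x y : 0 <= rest x y.
Proof. by apply: prodr_ge0 => j _; apply: kk_ge0. Qed.

Lemma kk_sw c d : kk eps c (sw d) = kk eps (sw c) d.
Proof.
rewrite /kk; congr (if _ then _ else _).
by rewrite -{1}(swK c) (inj_eq (can_inj swK)).
Qed.

Lemma KK_sig (x y : cube p n) : KK eps (sig x) y = KK eps x (sig y).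
Proof. by rewrite !KK_split rest_sigr rest_sigl sig_i sig_i kk_sw. Qed.

Lemma KK_fix (x y : cube p n) : x i != a -> x i != b -> KK eps x (sig y) = KK eps x y.
Proof.
move=> xa xb; rewrite !KK_split rest_sigr sig_i kk_sw sw_fix //.
Qed.

Lemma KK_le (x y : cube p n) : x i != a -> y i == b -> KK eps x (sig y) <= KK eps x y.
Proof.
move=> xa /eqP yb; rewrite !KK_split rest_sigr sig_i yb.
apply: ler_wpM2r; first exact: rest_ge0.
rewrite /sw eq_sym (negbTE ab) eqxx /kk.
case: (eqVneq (x i) b) => [->|xb]; first by rewrite (eq_sym b a) (negbTE ab) kk_off_le.
by rewrite (negbTE xa).
Qed.

Lemma SD (F : cube p n -> R) :
  \sum_(y : cube p n) F y = \sum_(y : cube p n | y i == b) (F y + F (sig y))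
             + \sum_(y : cube p n | (y i != b) && (y i != a)) F y.
Proof.
rewrite (bigID (fun y : cube p n => y i == b)) /= big_split /= -addrA; congr (_ + _).
rewrite (bigID (fun y : cube p n => y i == a)) /=; congr (_ + _).
rewrite (reindex_inj sig_inj) /=; apply: eq_bigl => y.
rewrite sig_i sw_eqa sw_eqb.
by case: (eqVneq (y i) b) => [->|]; rewrite ?andbF // eq_sym ab.
Qed.

Lemma PAIR (w : cube p n -> R) (g : cube p n -> bool) :
  \sum_(y : cube p n) w y * (pol g y)%:R = \sum_(y : cube p n) w y * (g y)%:R +
     \sum_(y : cube p n | y i == b) (if ~~ g y && g (sig y) then w y - w (sig y) else 0).
Proof.
rewrite !SD addrAC -big_split /=; congr (_ + _).
  apply: eq_bigr => y /eqP yb.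
  rewrite /pol yb eqxx sig_i yb sw_eqb sw_eqa eqxx sigK (eq_sym b a) (negbTE ab).
  by case: (g y); case: (g (sig y)) => /=; rewrite ?mulr0 ?mulr1 ?addr0 ?add0r //; ring.
apply: eq_bigr => y /andP [yb ya]; by rewrite /pol (negbTE yb) (negbTE ya).
Qed.

Lemma pol_sig g (x : cube p n) : pol (fun y => g (sig y)) x = pol g x.
Proof.
rewrite /pol sigK; case: ifP => xb; first by rewrite orbC.
case: ifP => xa; first by rewrite andbC.
congr g; apply/ffunP => j; rewrite ffunE; case: eqP => // ->.
by rewrite sw_fix ?xa ?xb.
Qed.

End Pol.

Lemma CV (R : realFieldType) (Phi : R -> R) (u v us vs : R) :
  convex01 Phi -> 0 <= u <= 1 -> 0 <= v <= 1 -> 0 <= us <= 1 -> 0 <= vs <= 1 ->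
  us + vs = u + v -> u <= us -> v <= us -> Phi u + Phi v <= Phi us + Phi vs.
Proof.
move=> cPhi hu hv hus hvs hs h1 h2.
case: (eqVneq us vs) => [e|ne].
  have eu : u = us by move: hs h1 h2; rewrite e; lra.
  have ev : v = us by move: hs h1 h2; rewrite e; lra.
  by rewrite eu ev e.
have lt : vs < us by rewrite lt_neqAle eq_sym ne /=; lra.
have d0 : 0 < us - vs by rewrite subr_gt0.
set t := (u - vs) / (us - vs).
have t0 : 0 <= t by rewrite divr_ge0 //; lra.
have t1 : t <= 1 by rewrite ler_pdivrMr // mul1r; lra.
have eu : t * us + (1 - t) * vs = u.
  rewrite /t; field; by rewrite subr_eq0 ne.
have ev : (1 - t) * us + (1 - (1 - t)) * vs = v.
  have -> : v = us + vs - u by lra.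
  rewrite -eu; ring.
have c1 := cPhi us vs t hus hvs (introT andP (conj t0 t1)).
have c2 : Phi ((1 - t) * us + (1 - (1 - t)) * vs) <=
          (1 - t) * Phi us + (1 - (1 - t)) * Phi vs.
  apply: cPhi => //; apply/andP; split; lra.
rewrite eu in c1; rewrite ev in c2.
lra.
Qed.

Section Main.
Variables (R : realFieldType) (p n : nat) (eps : R).
Hypothesis p1 : (1 < p)%N.
Hypothesis e0 : 0 <= eps.
Hypothesis e1 : eps <= 1 - (p%:R)^-1.

Definition Tg (g : cube p n -> bool) (x : cube p n) : R :=
  \sum_(y : cube p n) KK eps x y * (g y)%:R.

Lemma Tg_range g x : 0 <= Tg g x <= 1.
Proof.
apply/andP; split.
  by apply: sumr_ge0 => y _; rewrite mulr_ge0 ?ler0n ?(KK_ge0 p1 e0 e1).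
rewrite -(sum_KK eps p1 x); apply: ler_sum => y _.
rewrite -{2}(mulr1 (KK eps x y)); apply: ler_wpM2l; first exact: (KK_ge0 p1 e0 e1).
by case: (g y).
Qed.

Variables (i : 'I_n) (a b : 'Z_p).
Hypothesis ab : a != b.

Notation pol := (pol i a b).
Notation sig := (sig i a b).

Lemma L1 g (x : cube p n) : x i != a -> Tg g x <= Tg (pol g) x.
Proof.
move=> xa; rewrite /Tg PAIR // lerDl; apply: sumr_ge0 => y yb.
case: ifP => // _; rewrite subr_ge0; apply: KK_le => //.
Qed.

Lemma Lfix g (x : cube p n) : x i != a -> x i != b -> Tg (pol g) x = Tg g x.
Proof.
move=> xa xb; rewrite /Tg PAIR // [X in _ + X]big1 ?addr0 // => y _.
by case: ifP => // _; rewrite KK_fix // subrr.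
Qed.

Lemma L2 g (x : cube p n) : x i == b -> Tg g (sig x) <= Tg (pol g) x.
Proof.
move=> xb.
have -> : Tg g (sig x) = Tg (fun y => g (sig y)) x.
  rewrite /Tg (reindex_inj (@sig_inj p n i a b ab)) /=; apply: eq_bigr => y _.
  by rewrite (KK_sig eps i ab) (sigK i ab).
have -> : Tg (pol g) x = Tg (pol (fun y => g (sig y))) x.
  by apply: eq_bigr => y _; rewrite (pol_sig i ab).
apply: L1; apply: contraTneq xb => ->; exact: ab.
Qed.

Lemma L3 g (x : cube p n) : Tg (pol g) x + Tg (pol g) (sig x) = Tg g x + Tg g (sig x).
Proof.
rewrite /Tg -!big_split /=.
rewrite (eq_bigr (fun y => (KK eps x y + KK eps (sig x) y) * (pol g y)%:R));
  last by move=> y _; rewrite mulrDl.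
rewrite [RHS](eq_bigr (fun y => (KK eps x y + KK eps (sig x) y) * (g y)%:R));
  last by move=> y _; rewrite mulrDl.
rewrite PAIR // [X in _ + X]big1 ?addr0 // => y _.
case: ifP => // _; rewrite !(KK_sig eps i ab) (sigK i ab); ring.
Qed.

Lemma mass_pol g : \sum_(y : cube p n) ((pol g y)%:R : R) = \sum_(y : cube p n) (g y)%:R.
Proof.
have H := PAIR i ab (fun _ => (1 : R)) g.
rewrite [X in _ + X]big1 ?addr0 in H; last by move=> y _; case: ifP => // _; rewrite subrr.
rewrite (eq_bigr (fun y => 1 * (pol g y)%:R)); last by move=> y _; rewrite mul1r.
by rewrite H; apply: eq_bigr => y _; rewrite mul1r.
Qed.

Lemma polV (Phi : R -> R) g : convex01 Phi ->
  \sum_(x : cube p n) Phi (Tg g x) <= \sum_(x : cube p n) Phi (Tg (pol g) x).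
Proof.
move=> cPhi; rewrite !(SD i ab); apply: lerD.
  apply: ler_sum => x xb; apply: CV => //; rewrite ?Tg_range ?L3 ?L2 //.
  by apply: L1; apply: contraTneq xb => ->.
by apply: ler_sum => x /andP [xb xa]; rewrite Lfix.
Qed.

End Main.

Section Mono.
Variables (p n : nat).

Lemma mono_of (g : cube p n -> bool) :
  (forall (i : 'I_n) (a b : 'Z_p) (y0 : cube p n), (val a < val b)%N -> y0 i == b ->
      g (sig i a b y0) -> g y0) -> monotone_bool g.
Proof.
move=> H.
suff S : forall d (x y : cube p n), (#|[pred j | x j != y j]| <= d)%N ->
    (forall i, val (x i) <= val (y i))%N -> g x -> g y.
  by move=> x y le; apply/implyP; exact: S (leqnn _) le.
elim=> [|d IH] x y.
  move=> c0 _; have -> // : x = y.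
  apply/ffunP => j; apply/eqP; apply/negPn/negP => xj.
  have : (0 < #|[pred j | x j != y j]|)%N by apply/card_gt0P; exists j.
  by rewrite leqNgt in c0; rewrite (negbTE c0).
move=> c le gx.
case: (pickP [pred j | x j != y j]) => [i /= xi|none]; last first.
  have exy : x = y.
    by apply/ffunP => j; apply/eqP; move: (none j) => /= /negbFE.
  by rewrite -exy.
pose x' : cube p n := [ffun j => if j == i then y i else x j].
have ab : (val (x i) < val (y i))%N.
  by rewrite ltn_neqAle le andbT; move: xi; apply: contra => /eqP/val_inj ->.
have ex : sig i (x i) (y i) x' = x.
  apply/ffunP => j; rewrite !ffunE; case: (eqVneq j i) => [->|//].
  by rewrite /sw (eq_sym (y i)) (negbTE xi) eqxx.
have gx' : g x' by apply: (H i (x i) (y i)) => //; [rewrite ffunE eqxx | rewrite ex].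
apply: (IH x') => //.
  have c' := c; rewrite (cardD1 i) inE xi /= add1n ltnS in c'.
  apply: leq_trans c'; apply: subset_leq_card; apply/subsetP => j; rewrite !inE ffunE.
  by case: (eqVneq j i) => [->|ji]; rewrite ?eqxx // andbT.
by move=> k; rewrite ffunE; case: eqP => [->|_] //; apply: le.
Qed.

End Mono.

Section Final.
Variables (R : realFieldType) (p n : nat) (eps : R) (Phi : R -> R).

Definition mass (g : cube p n -> bool) : R := \sum_(x : cube p n) (g x)%:R.
Definition Vv (g : cube p n -> bool) : R := \sum_(x : cube p n) Phi (Tg eps g x).
Definition ww (x : cube p n) : R := (\sum_(j < n) val (x j))%:R.
Definition pot (g : cube p n -> bool) : R := \sum_(x : cube p n) ww x * (g x)%:R.

Lemma mass_ext (g h : cube p n -> bool) : g =1 h -> mass g = mass h.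
Proof. by move=> e; apply: eq_bigr => x _; rewrite e. Qed.
Lemma Tg_ext (g h : cube p n -> bool) (x : cube p n) : g =1 h -> Tg eps g x = Tg eps h x.
Proof. by move=> e; apply: eq_bigr => y _; rewrite e. Qed.
Lemma Vv_ext (g h : cube p n -> bool) : g =1 h -> Vv g = Vv h.
Proof. by move=> e; apply: eq_bigr => x _; rewrite (Tg_ext _ e). Qed.
Lemma pot_ext (g h : cube p n -> bool) : g =1 h -> pot g = pot h.
Proof. by move=> e; apply: eq_bigr => x _; rewrite e. Qed.

Lemma ww_diff (i : 'I_n) (a b : 'Z_p) (y : cube p n) : y i == b ->
  ww y - ww (sig i a b y) = (val b)%:R - (val a)%:R.
Proof.
move=> /eqP yb.
have E (z : cube p n) : (\sum_(j < n) val (z j))%N = (val (z i) + \sum_(j < n | j != i) val (z j))%N.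
  by rewrite (bigD1 i).
rewrite /ww !E sig_i yb /sw.
rewrite eqxx (eq_bigr (fun j => val (y j)) (fun j ji => congr1 val (sig_j a b y ji))).
case: (eqVneq b a) => [->|ba]; first by rewrite !subrr.
rewrite !natrD; ring.
Qed.

Lemma pot_pol (i : 'I_n) (a b : 'Z_p) (g : cube p n -> bool) (y0 : cube p n) :
  (val a < val b)%N -> y0 i == b -> ~~ g y0 -> g (sig i a b y0) ->
  pot g < pot (pol i a b g).
Proof.
move=> ab yb gy gs.
have ab' : a != b by apply: contraTneq ab => ->; rewrite ltnn.
rewrite /pot PAIR // ltrDl.
have pos : forall y : cube p n, y i == b -> 0 <= (if ~~ g y && g (sig i a b y) then ww y - ww (sig i a b y) else 0).
  move=> y ybb; case: ifP => // _; rewrite ww_diff // subr_ge0 ler_nat ltnW //.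
rewrite (bigD1 y0) //= gy gs /= ww_diff //.
apply: ltr_pwDl; last by apply: sumr_ge0 => y /andP [ybb _]; apply: pos.
by rewrite subr_gt0 ltr_nat.
Qed.

End Final.
Unset Implicit Arguments. Set Strict Implicit. Set Printing Implicit Defensive.

Theorem theorem5 (R : realFieldType) (p n : nat) (eps : R) (j : nat) (Phi : R -> R) :
  (1 < p)%N -> (1 <= n)%N ->
  0 <= eps -> eps <= 1 - (p%:R)^-1 ->
  (j <= p ^ n)%N ->
  convex01 Phi ->
  exists f : cube p n -> bool,
    monotone_bool f /\
    expect (bool_fun R f) = j%:R / (p ^ n)%:R /\
    forall g : cube p n -> bool,
      expect (bool_fun R g) = j%:R / (p ^ n)%:R ->
      expect (fun x => Phi (T_noise eps (bool_fun R g) x))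
        <= expect (fun x => Phi (T_noise eps (bool_fun R f) x)).
Proof.
move=> p1 n1 e0 e1 jle cPhi.
have NE : #|{: cube p n}| = (p ^ n)%N by rewrite card_ffun card_ord card_ord Zp_cast.
have N0 : (p ^ n)%:R != 0 :> R by rewrite pnatr_eq0 -lt0n expn_gt0 ltnW.
have massE (g : cube p n -> bool) : expect (bool_fun R g) = mass R g / (p ^ n)%:R.
  by rewrite /expect NE.
have VE (g : cube p n -> bool) :
    expect (fun x => Phi (T_noise eps (bool_fun R g) x)) = Vv eps Phi g / (p ^ n)%:R.
  by rewrite /expect NE; congr (_ / _); apply: eq_bigr => x _; rewrite T_noiseE.
have massP (g : cube p n -> bool) : expect (bool_fun R g) = j%:R / (p ^ n)%:R -> mass R g = j%:R.
  by rewrite massE => H; have := congr1 (fun t => t * (p ^ n)%:R) H; rewrite /= !divfK.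
pose P (h : {ffun cube p n -> bool}) := mass R h == j%:R.
pose g0 : {ffun cube p n -> bool} := [ffun x => (enum_rank x < j)%N].
have Pg0 : P g0.
  rewrite /P /mass (eq_bigr (fun x => ((enum_rank x < j)%N)%:R : R)); last by move=> x _; rewrite ffunE.
  rewrite (reindex _ (onW_bij _ (@enum_val_bij (cube p n)))) /=.
  rewrite (eq_bigr (fun k : 'I_#|{: cube p n}| => ((k < j)%N)%:R : R)); last by move=> k _; rewrite enum_valK.
  rewrite -(big_mkord xpredT (fun k => ((k < j)%N)%:R : R)).
  have jN : (j <= #|{: cube p n}|)%N by rewrite NE.
  rewrite (big_cat_nat (leq0n j) jN) /=.
  rewrite (eq_big_nat _ _ (F2 := fun _ => 1)); last by move=> k /andP [_ ->].
  rewrite [X in _ + X](eq_big_nat _ _ (F2 := fun _ => 0)); last by move=> k /andP [jk _]; rewrite ltnNge jk.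
  by rewrite [X in X + _]sumr_const_nat [X in _ + X]big1 // addr0 subn0.
case: (arg_maxP (fun h : {ffun cube p n -> bool} => Vv eps Phi h) Pg0) => gm Pgm maxm.
pose Q (h : {ffun cube p n -> bool}) := P h && (Vv eps Phi h == Vv eps Phi gm).
have Qgm : Q gm by rewrite /Q Pgm eqxx.
case: (arg_maxP (fun h : {ffun cube p n -> bool} => pot R h) Qgm) => gf /andP [Pgf /eqP Vgf] maxf.
exists (fun x => gf x); split; last split.
- apply: mono_of => i a b y0 ab yb gs; apply: contraT => ngy.
  have ab' : a != b by apply: contraTneq ab => ->; rewrite ltnn.
  pose g' : {ffun cube p n -> bool} := [ffun x => pol i a b gf x].
  have e' : g' =1 pol i a b gf by move=> x; rewrite ffunE.
  have Pg' : P g' by rewrite /P (mass_ext R e') /mass (mass_pol R i ab').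
  have V1 : Vv eps Phi gf <= Vv eps Phi g'.
    by rewrite (Vv_ext eps Phi e'); apply: (polV p1 e0 e1 i ab').
  have V2 := maxm g' Pg'.
  have Qg' : Q g'.
    by rewrite /Q Pg' /=; apply/eqP/le_anti; apply/andP; split; [exact: V2 | rewrite -Vgf; exact: V1].
  have := maxf g' Qg'; rewrite /= (pot_ext R e').
  have := pot_pol R ab yb ngy gs.
  by move=> lt le; have := lt_le_trans lt le; rewrite ltxx.
- by rewrite massE (eqP Pgf).
- move=> g /massP mg; rewrite !VE; apply: ler_wpM2r; first by rewrite invr_ge0 ler0n.
  pose gg : {ffun cube p n -> bool} := [ffun x => g x].
  have eg : gg =1 g by move=> x; rewrite ffunE.
  have Pgg : P gg by rewrite /P (mass_ext R eg) mg.
  by have := maxm gg Pgg; rewrite /= (Vv_ext eps Phi eg) -Vgf.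
Qed.
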